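(* Let $(a,b)$ and $(c,d)$ be arcs of the completed $\infty$-gon, identified with indecomposable objects of $\mathcal{C}_2$. Then \[ \mathrm{Hom}_R((a,b),(c,d))\cong\begin{cases}\mathbb{C}^2&\text{if }-\infty<a\le c\text{ and }b\le d,\\ 0&\text{if }-\infty=a\le c\text{ and }d<b,\\ 0&\text{if }d<a,\\ \mathbb{C}&\text{otherwise,}\end{cases} \] where $\mathrm{Hom}_R$ denotes degree-preserving homomorphisms of graded $R$-modules.
   Context: Let $R=\mathbb{C}[x,y]/(x^2)$, graded with $\deg x=1$, $\deg y=-1$; $M(j)_n=M_{j+n}$. $\mathcal{C}_2$ is the category of finitely generated $\mathbb{Z}$-graded maximal Cohen–Macaulay $R$-modules with degree-preserving morphisms. An arc of the completed $\infty$-gon is a pair $(a,b)$ with $a\in\mathbb{Z}\cup\{-\infty\}$, $b\in\mathbb{Z}$, $a<b$ (with $-\infty$ smaller than every integer). Indecomposables correspond to arcs via $(x,y^k)(j)\leftrightarrow(-j-k,1-j)$ for $k\ge0$, $j\in\mathbb{Z}$ (with $(x,y^0)=R$), and $\mathbb{C}[y](j)=(R/(x))(j)\leftrightarrow(-\infty,-j)$; equivalently a finite arc $(a,b)$ is $(x,y^{b-a-1})(1-b)$ and an infinite arc $(-\infty,b)$ is $\mathbb{C}[y](-b)$. *)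

(* Defs.v *)
From HB Require Import structures.
From mathcomp Require Import all_boot all_order all_algebra.
From mathcomp Require Import complex.
From mathcomp Require Import Rstruct.
Set Implicit Arguments. Unset Strict Implicit. Unset Printing Implicit Defensive.
Import Order.TTheory GRing.Theory Num.Theory.
Local Open Scope ring_scope.

Definition CC : fieldType := (Rdefinitions.R)[i].

(* R = C[x,y]/(x^2): an element p(y) + x q(y) is represented by (p, q). *)
Definition Rel : Type := ({poly CC} * {poly CC})%type.

(* multiplication in R (using x^2 = 0) *)
Definition Rmul (r v : Rel) : Rel := (r.1 * v.1, r.1 * v.2 + r.2 * v.1).

Definition sc (c : CC) (v : Rel) : Rel := (c *: v.1, c *: v.2).

Definition pcomp (p : {poly CC}) (e : int) : bool :=
  match e with
  | Posz m => p == p`_m *: 'X^m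
  | Negz _ => p == 0
  end.

(* R_m : deg x = 1, deg y = -1, so y^e has degree -e and x y^e degree 1-e. *)
Definition Rhomog (m : int) (v : Rel) : bool := pcomp v.1 (- m) && pcomp v.2 (1 - m).

(* An arc is (a, b) with a : option int (None = -oo), b : int, a < b. *)
Definition arc_ok (a : option int) (b : int) : Prop :=
  match a with Some a' => (a' < b)%R | None => True end.

Definition le_ext (a c : option int) : bool :=
  match a, c with
  | None, _ => true
  | Some _, None => false
  | Some a', Some c' => (a' <= c')%R
  end.

(* The indecomposable attached to the arc:
   finite (a,b)  ~  (x, y^(b-a-1))(1-b), a graded submodule of R(1-b);
   (-oo,b)      ~  C[y](-b) = (R/(x))(-b), represented inside Rel as
                   the elements (p, 0), with R acting through R -> R/(x). *)
Definition mod_mem (a : option int) (b : int) (v : Rel) : bool :=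
  match a with
  | Some a' => ('X^(absz (b - a' - 1)%R) %| v.1)%R
  | None => v.2 == 0
  end.

Definition mod_act (a : option int) (r v : Rel) : Rel :=
  match a with
  | Some _ => Rmul r v
  | None => (r.1 * v.1, 0)
  end.

(* v is homogeneous of degree n in the module (M(j)_n = M_(j+n)) *)
Definition mod_homog (a : option int) (b : int) (n : int) (v : Rel) : bool :=
  match a with
  | Some _ => Rhomog ((1 - b) + n) v
  | None => pcomp v.1 (- ((- b) + n)) && (v.2 == 0)
  end.

(* f is a degree-preserving homomorphism of graded R-modules from the module
   of arc (a,b) to the module of arc (c,d) (f is only relevant on elements of
   the source module). *)
Definition is_hom (a : option int) (b : int) (c : option int) (d : int)
    (f : Rel -> Rel) : Prop :=
  [/\ (forall v, mod_mem a b v -> mod_mem c d (f v)),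
      (forall u v, mod_mem a b u -> mod_mem a b v -> f (u + v) = f u + f v),
      (forall r v, mod_mem a b v -> f (mod_act a r v) = mod_act c r (f v))
    & (forall n v, mod_mem a b v -> mod_homog a b n v -> mod_homog c d n (f v))].

(* Hom_R((a,b),(c,d)) is isomorphic to C^k as a C-vector space: there are
   homomorphisms f_0..f_(k-1) forming a basis (homomorphisms are identified
   when they agree on the source module). *)
Definition hom_iso_Ck (a : option int) (b : int) (c : option int) (d : int)
    (k : nat) : Prop :=
  exists fs : 'I_k -> Rel -> Rel,
    [/\ (forall i, is_hom a b c d (fs i)),
        (forall cs : 'I_k -> CC,
           (forall v, mod_mem a b v -> \sum_(i < k) sc (cs i) (fs i v) = 0) ->
           forall i, cs i = 0)
      & (forall g, is_hom a b c d g ->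
           exists cs : 'I_k -> CC,
             forall v, mod_mem a b v -> g v = \sum_(i < k) sc (cs i) (fs i v))].

(* Main.v *)
Require Import Defs.
From HB Require Import structures.
From mathcomp Require Import all_boot all_order all_algebra.
From mathcomp Require Import zify ring.
Require Import Defs.
Import Order.TTheory GRing.Theory Num.Theory.
Local Open Scope ring_scope.

Lemma pcompP (p : {poly CC}) (e : int) :
  pcomp p e <-> (forall i : nat, Posz i <> e -> p`_i = 0).
Proof.
case: e => m; rewrite /pcomp; split.
- move/eqP=> E i hi; rewrite E coefZ coefXn.
  case: eqVneq => [h|_]; last by rewrite mulr0.
  by subst; case: hi.
- move=> H; apply/eqP/polyP => i; rewrite coefZ coefXn.
  case: eqVneq => [->|ne]; first by rewrite mulr1.
  by rewrite mulr0 H // => -[h]; rewrite h eqxx in ne.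
- by move/eqP=> -> i _; rewrite coef0.
- by move=> H; apply/eqP/polyP => i; rewrite coef0 H.
Qed.

Lemma pcomp0 e : pcomp 0 e.
Proof. by apply/pcompP => i _; rewrite coef0. Qed.

Lemma pcompD p q e : pcomp p e -> pcomp q e -> pcomp (p + q) e.
Proof.
move=> /pcompP hp /pcompP hq; apply/pcompP => i hi.
by rewrite coefD hp // hq // addr0.
Qed.

Lemma pcompZ (c : CC) p e : pcomp p e -> pcomp (c *: p) e.
Proof. by move=> /pcompP hp; apply/pcompP => i hi; rewrite coefZ hp // mulr0. Qed.

Lemma pcompM p q e1 e2 : pcomp p e1 -> pcomp q e2 -> pcomp (p * q) (e1 + e2).
Proof.
move=> /pcompP hp /pcompP hq; apply/pcompP => i hi.
rewrite coefM big1 // => j _.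
case: (eqVneq (Posz j) e1) => hj; last by rewrite hp ?mul0r //; apply/eqP.
rewrite hq ?mulr0 // => h; apply: hi; rewrite -hj -h.
have := ltn_ord j; lia.
Qed.

Lemma pcompX m e : Posz m = e -> pcomp 'X^m e.
Proof. by move=> <-; rewrite /pcomp coefXn eqxx scale1r. Qed.

Lemma pcomp_div p e k : pcomp p e -> 'X^k %| p -> pcomp (p %/ 'X^k) (e - k%:Z).
Proof.
move=> /pcompP hp hd; apply/pcompP => i hi.
have E : p = p %/ 'X^k * 'X^k by rewrite divpK.
have := coefMXn k (p %/ 'X^k) (i + k).
rewrite ltnNge leq_addl /= addnK => <-; rewrite -E; apply: hp => h.
apply: hi; rewrite -h; lia.
Qed.

Lemma pcomp_neg p e : pcomp p e -> e < 0 -> p = 0.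
Proof.
move=> /pcompP hp he; apply/polyP => i; rewrite coef0 hp // => h.
move: he; rewrite -h; lia.
Qed.

Lemma pcomp_pos p e : pcomp p e -> 0 <= e -> p = p`_(absz e) *: 'X^(absz e).
Proof. by case: e => m; rewrite /pcomp => /eqP. Qed.

Lemma dvdX_coef l (p : {poly CC}) m : 'X^l %| p -> (m < l)%N -> p`_m = 0.
Proof. by move=> hd hm; rewrite -(divpK hd) coefMXn hm. Qed.

Lemma addRelE (u v : Rel) : u + v = (u.1 + v.1, u.2 + v.2).
Proof. by []. Qed.
Lemma zeroRelE : (0 : Rel) = (0, 0).
Proof. by []. Qed.
Lemma RelE (u : Rel) : u = (u.1, u.2).
Proof. by case: u. Qed.

Lemma mem_add c d u v : mod_mem c d u -> mod_mem c d v -> mod_mem c d (u + v).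
Proof.
case: c => [c|] /=; first by move=> *; rewrite dvdp_add.
by move=> /eqP hu /eqP hv; rewrite hu hv addr0.
Qed.

Lemma mem_act c d r v : mod_mem c d v -> mod_mem c d (mod_act c r v).
Proof. by case: c => [c|] //= h; rewrite dvdp_mull. Qed.

Lemma mem0 c d : mod_mem c d 0.
Proof. by case: c => [c|] //=; rewrite dvdp0. Qed.

Ltac relring := rewrite /sc ?addRelE ?zeroRelE /=; rewrite -?mul_polyC; congr pair; ring.

Lemma act_addl c r s m : mod_act c (r + s) m = mod_act c r m + mod_act c s m.
Proof. case: c => [c|] /=; rewrite /Rmul; relring. Qed.
Lemma act_addr c r m m' : mod_act c r (m + m') = mod_act c r m + mod_act c r m'.
Proof. case: c => [c|] /=; rewrite /Rmul; relring. Qed.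
Lemma act0r c r : mod_act c r 0 = 0.
Proof. case: c => [c|] /=; rewrite /Rmul; relring. Qed.
Lemma act0l c m : mod_act c 0 m = 0.
Proof. case: c => [c|] /=; rewrite /Rmul; relring. Qed.
Lemma act_sc c r (al : CC) m : mod_act c r (sc al m) = sc al (mod_act c r m).
Proof. case: c => [c|] /=; rewrite /Rmul; relring. Qed.
Lemma sc_add (al : CC) u v : sc al (u + v) = sc al u + sc al v.
Proof. relring. Qed.

Definition kk (a : option int) (b : int) : nat :=
  if a is Some a' then absz (b - a' - 1)%R else 0%N.
Definition gen1 a b : Rel := ('X^(kk a b), 0).
Definition gen2 (a : option int) : Rel := if a is Some _ then (0, 1) else 0.
Definition deg1 (a : option int) (b : int) : int := if a is Some a' then a' else b.
Definition FF a b c (m1 m2 : Rel) (v : Rel) : Rel :=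
  mod_act c (v.1 %/ 'X^(kk a b), 0) m1 + mod_act c (v.2, 0) m2.
Definition GP a b c d (m1 m2 : Rel) : Prop :=
  [/\ mod_mem c d m1, mod_mem c d m2, mod_homog c d (deg1 a b) m1,
      mod_homog c d b m2 & [/\ mod_act c (0, 1) m1 = mod_act c ('X^(kk a b), 0) m2,
      mod_act c (0, 1) m2 = 0 & (a = None -> m2 = 0)]].

Lemma Xn_neq0 k : ('X^k : {poly CC}) != 0.
Proof. by rewrite expf_neq0 // polyX_eq0. Qed.

Lemma gen_mem a b : mod_mem a b (gen1 a b) /\ mod_mem a b (gen2 a).
Proof. by case: a => [a|] //=; rewrite dvdpp dvdp0. Qed.

Lemma gen_homog a b : arc_ok a b ->
  mod_homog a b (deg1 a b) (gen1 a b) /\ mod_homog a b b (gen2 a).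
Proof.
case: a => [a|] /= hab.
  rewrite /Rhomog /= !pcomp0 andbT -(expr0 ('X : {poly CC})); split.
  apply: pcompX; lia.
  apply: pcompX; lia.
by rewrite eqxx pcomp0 andbT; split=> //; apply: pcompX; lia.
Qed.

Lemma decomp a b v : mod_mem a b v ->
  v = mod_act a (v.1 %/ 'X^(kk a b), 0) (gen1 a b) + mod_act a (v.2, 0) (gen2 a).
Proof.
case: a => [a|] /= hv.
  rewrite /Rmul /=; rewrite {1}(RelE v) -{1}(divpK hv); relring.
move/eqP: hv => hv; rewrite expr0 divp1 {1}(RelE v) hv; relring.
Qed.

Lemma hom0 a b c d g : is_hom a b c d g -> g 0 = 0.
Proof.
case=> _ Hadd _ _; have H := Hadd 0 0 (mem0 _ _) (mem0 _ _).
rewrite addr0 in H; apply: (@addrI _ (g 0)); rewrite addr0.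
by rewrite -H.
Qed.

Lemma act1 c d m : mod_mem c d m -> mod_act c (1, 0) m = m.
Proof.
case: m => m1 m2; case: c => [c|] /= hm; first by rewrite /Rmul /=; relring.
by move/eqP: hm => ->; relring.
Qed.

Lemma char a b c d g : arc_ok a b -> is_hom a b c d g ->
  GP a b c d (g (gen1 a b)) (g (gen2 a)) /\
  (forall v, mod_mem a b v -> g v = FF a b c (g (gen1 a b)) (g (gen2 a)) v).
Proof.
move=> hab Hg; have Hg0 := @hom0 _ _ _ _ _ Hg; case: Hg => Hm Hadd Hact Hdeg.
have [m1 m2] := gen_mem a b; have [h1 h2] := @gen_homog _ _ hab.
split.
  split; [exact: Hm | exact: Hm | exact: Hdeg | exact: Hdeg | split ].
  - rewrite -!Hact //; congr g; case: a {m1 m2 h1 h2 hab Hm Hadd Hact Hdeg} => [a|] /=.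
      rewrite /Rmul; relring.
    relring.
  - rewrite -Hact //; rewrite -[RHS]Hg0; congr g.
    case: a {m1 m2 h1 h2 hab Hm Hadd Hact Hdeg} => [a|] /=; rewrite /Rmul; relring.
  - by move=> ha; subst a; rewrite /= Hg0.
move=> v hv; rewrite {1}(@decomp _ _ _ hv) Hadd ?Hact //; exact: mem_act.
Qed.

Lemma homog_add c d n u v : mod_homog c d n u -> mod_homog c d n v ->
  mod_homog c d n (u + v).
Proof.
case: c => [c|] /=.
  by rewrite /Rhomog => /andP[h1 h2] /andP[h3 h4]; rewrite pcompD ?pcompD.
by move=> /andP[h1 /eqP h2] /andP[h3 /eqP h4]; rewrite pcompD //= h2 h4 addr0 eqxx.
Qed.

Lemma homog_act c d n e s m : pcomp s e -> mod_homog c d n m ->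
  mod_homog c d (n - e) (mod_act c (s, 0) m).
Proof.
case: c => [c|] /= hs.
  rewrite /Rhomog /Rmul /= mul0r addr0 => /andP[h1 h2].
  have e1 : e + - ((1 - d) + n) = - ((1 - d) + (n - e)) by lia.
  have e2 : e + (1 - ((1 - d) + n)) = 1 - ((1 - d) + (n - e)) by lia.
  by rewrite -e2 -e1 !pcompM.
move=> /andP[h1 h2]; rewrite eqxx andbT.
have e1 : e + - ((- d) + n) = - ((- d) + (n - e)) by lia.
by rewrite -e1 pcompM.
Qed.

Lemma homog_eq c d n n' m : n = n' -> mod_homog c d n m -> mod_homog c d n' m.
Proof. by move=> ->. Qed.

Lemma FF_hom a b c d m1 m2 : arc_ok a b -> GP a b c d m1 m2 ->
  is_hom a b c d (FF a b c m1 m2).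
Proof.
move=> hab [hm1 hm2 hd1 hd2 [r1 r2 hN]]; split.
- by move=> v _; rewrite /FF; apply: mem_add; apply: mem_act.
- move=> u v _ _; rewrite /FF addRelE divpD.
  case: (c) {hd1 hd2 r1 r2 hm1 hm2} => [c'|] /=; rewrite /Rmul; relring.
- move=> r v hv.
  case: a hab hv r1 r2 hN hd1 {hd2} => [a|] /= hab hv r1 r2 hN hd1.
    have E : r.1 * v.1 %/ 'X^(absz (b - a - 1)%R) = r.1 * (v.1 %/ 'X^(absz (b - a - 1)%R)).
      by rewrite -{1}(divpK hv) mulrA mulpK ?Xn_neq0.
    rewrite /FF /Rmul /= E.
    have Ev : v.1 = v.1 %/ 'X^(absz (b - a - 1)%R) * 'X^(absz (b - a - 1)%R) by rewrite divpK.
    set p := v.1 %/ _ in Ev *; clearbody p; rewrite Ev.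
    case: c hm1 hm2 r1 r2 {hd1} => [c|] /= hm1 hm2.
      rewrite /Rmul /= => -[] _ e1 [] _ e2.
      rewrite ?mul0r ?mul1r ?add0r ?addr0 in e1 e2.
      rewrite e1 e2; relring.
    move=> [] e1 _; rewrite mul0r in e1; move/eqP: e1.
    rewrite eq_sym mulf_eq0 (negPf (Xn_neq0 _)) /= => /eqP e1.
    rewrite (RelE m2) e1; relring.
  move: r1; rewrite hN // act0r => r1.
  rewrite /FF /= !act0r !addr0 expr0 !divp1.
  case: c hm1 hm2 r1 {hd1 r2} => [c|] /= hm1 hm2; last by move=> _; relring.
  rewrite /Rmul zeroRelE /= => -[] _ e1.
  rewrite ?mul0r ?mul1r ?add0r in e1.
  rewrite e1; relring.
- move=> n v hv hvd.
  have h1 : pcomp (v.1 %/ 'X^(kk a b)) (deg1 a b - n).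
    case: a hab hv hvd {hN hd1 r1 r2} => [a|] /= hab hv.
      rewrite /Rhomog => /andP[h1 _].
      have := @pcomp_div _ _ _ h1 hv; congr pcomp; lia.
    move=> /andP[h1 _]; have := @pcomp_div _ _ 0 h1 (dvd1p _).
    congr pcomp; lia.
  have h2 : pcomp v.2 (b - n).
    case: a hab hv hvd {hN hd1 r1 r2 h1} => [a|] /= hab hv.
      rewrite /Rhomog => /andP[_ h2]; move: h2; congr pcomp; lia.
    by move=> /andP[_ /eqP ->]; rewrite pcomp0.
  rewrite /FF; apply: homog_add.
    apply: (@homog_eq _ _ _ _ _ _ (@homog_act _ _ _ _ _ _ h1 hd1)); lia.
  apply: (@homog_eq _ _ _ _ _ _ (@homog_act _ _ _ _ _ _ h2 hd2)); lia.
Qed.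

Lemma FF_gen a b c d m1 m2 : GP a b c d m1 m2 ->
  FF a b c m1 m2 (gen1 a b) = m1 /\ FF a b c m1 m2 (gen2 a) = m2.
Proof.
case=> hm1 hm2 _ _ [_ _ hN]; rewrite /FF /gen1 /=; split.
  by rewrite divpp ?Xn_neq0 // (@act1 _ _ _ hm1) -zeroRelE act0l addr0.
case: a hN => [a|] hN /=.
  by rewrite div0p -zeroRelE act0l add0r (@act1 _ _ _ hm2).
by rewrite hN // div0p -zeroRelE !act0l addr0.
Qed.

Lemma FF_add a b c m1 m2 m1' m2' v :
  FF a b c (m1 + m1') (m2 + m2') v = FF a b c m1 m2 v + FF a b c m1' m2' v.
Proof. by rewrite /FF !act_addr addrACA. Qed.

Lemma FF_sc a b c (al : CC) m1 m2 v :
  FF a b c (sc al m1) (sc al m2) v = sc al (FF a b c m1 m2 v).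
Proof. by rewrite /FF !act_sc sc_add. Qed.

Lemma FF0 a b c v : FF a b c 0 0 v = 0.
Proof. by rewrite /FF !act0r addr0. Qed.

Lemma iso0 a b c d : arc_ok a b ->
  (forall m1 m2, GP a b c d m1 m2 -> m1 = 0 /\ m2 = 0) -> hom_iso_Ck a b c d 0.
Proof.
move=> hab H; exists (fun _ _ => 0); split; [by case | by move=> cs _ [] | ].
move=> g Hg; exists (fun _ => 0); move=> v hv; rewrite big_ord0.
have [G E] := @char _ _ _ _ _ hab Hg; have [e1 e2] := H _ _ G.
by rewrite E // e1 e2 FF0.
Qed.

Lemma sc_eq0 (al : CC) (u : Rel) : sc al u = 0 -> u <> 0 -> al = 0.
Proof.
case: u => p q; rewrite /sc zeroRelE => -[] h1 h2 hne.
case: (eqVneq al 0) => // hal; case: hne.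
move/eqP: h1; rewrite scale_poly_eq0 (negPf hal) /= => /eqP ->.
by move/eqP: h2; rewrite scale_poly_eq0 (negPf hal) /= => /eqP ->.
Qed.

Lemma iso1 a b c d n1 n2 : arc_ok a b -> GP a b c d n1 n2 ->
  (n1 <> 0 \/ n2 <> 0) ->
  (forall m1 m2, GP a b c d m1 m2 -> exists al, m1 = sc al n1 /\ m2 = sc al n2) ->
  hom_iso_Ck a b c d 1.
Proof.
move=> hab Gn hne H; exists (fun _ => FF a b c n1 n2); split.
- by move=> _; apply: FF_hom.
- move=> cs Hc i; rewrite (ord1 i).
  have [g1 g2] := gen_mem a b; have [F1 F2] := @FF_gen _ _ _ _ _ _ Gn.
  have := Hc _ g1; have := Hc _ g2; rewrite !big_ord1 F1 F2 => h2 h1.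
  by case: hne => hne; [exact: (@sc_eq0 _ _ h1 hne) | exact: (@sc_eq0 _ _ h2 hne)].
- move=> g Hg; have [G E] := @char _ _ _ _ _ hab Hg; have [al [e1 e2]] := H _ _ G.
  by exists (fun _ => al); move=> v hv; rewrite big_ord1 E // e1 e2 FF_sc.
Qed.

Lemma iso2 a b c d n1 n2 n1' n2' : arc_ok a b -> GP a b c d n1 n2 ->
  GP a b c d n1' n2' ->
  (forall al be, sc al n1 + sc be n1' = 0 -> sc al n2 + sc be n2' = 0 ->
     al = 0 /\ be = 0) ->
  (forall m1 m2, GP a b c d m1 m2 -> exists al be,
     m1 = sc al n1 + sc be n1' /\ m2 = sc al n2 + sc be n2') ->
  hom_iso_Ck a b c d 2.
Proof.
move=> hab Gn Gn' hind H.
exists (fun i => if i == ord0 then FF a b c n1 n2 else FF a b c n1' n2'); split.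
- by move=> i; case: (i == ord0); apply: FF_hom.
- move=> cs Hc.
  have [g1 g2] := gen_mem a b; have [F1 F2] := @FF_gen _ _ _ _ _ _ Gn; have [F1' F2'] := @FF_gen _ _ _ _ _ _ Gn'.
  have := Hc _ g1; have := Hc _ g2; rewrite !big_ord_recl !big_ord0 /= !addr0.
  rewrite F1 F2 F1' F2' => h2 h1.
  have [c0 c1] := hind _ _ h1 h2.
  case=> -[|[|//]] hi.
    by rewrite -c0; congr cs; apply: val_inj.
  by rewrite -c1; congr cs; apply: val_inj.
- move=> g Hg; have [G E] := @char _ _ _ _ _ hab Hg; have [al [be [e1 e2]]] := H _ _ G.
  exists (fun i => if i == ord0 then al else be); move=> v hv.
  by rewrite !big_ord_recl big_ord0 /= addr0 E // e1 e2 FF_add !FF_sc.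
Qed.

Lemma pcompM' p q e1 e2 e : e1 + e2 = e -> pcomp p e1 -> pcomp q e2 -> pcomp (p * q) e.
Proof. by move=> <-; apply: pcompM. Qed.

Lemma pcomp_deg p e e' : e = e' -> pcomp p e -> pcomp p e'.
Proof. by move=> ->. Qed.

Lemma scX0 (al : CC) m : al *: ('X^m : {poly CC}) = 0 -> al = 0.
Proof.
move/eqP; rewrite scale_poly_eq0 (negPf (Xn_neq0 _)) orbF.
by move/eqP.
Qed.

Lemma GP_SS_E a b c d p1 q1 p2 q2 :
  GP (Some a) b (Some c) d (p1, q1) (p2, q2) ->
  [/\ p2 = 0, p1 = 'X^(absz (b - a - 1)%R) * q2, pcomp q1 (d - a),
      pcomp q2 (d - b) & 'X^(absz (d - c - 1)%R) %| p1].
Proof.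
case=> hm1 hm2 hd1 hd2 [r1 r2 _].
move: hd1 hd2 r1 r2; rewrite /= /Rhomog /Rmul /= zeroRelE.
move=> /andP[a1 a2] /andP[b1 b2] [e1 e2] [e3 e4].
rewrite mul0r add0r mul1r in e4; rewrite e4 !mul0r add0r addr0 mul1r in e2.
split => //.
- by apply: pcomp_deg a2; lia.
- by apply: pcomp_deg b2; lia.
Qed.

Lemma GP_SS_I a b c d p1 q1 p2 q2 : a < b ->
  p2 = 0 -> p1 = 'X^(absz (b - a - 1)%R) * q2 -> pcomp q1 (d - a) ->
  pcomp q2 (d - b) -> 'X^(absz (d - c - 1)%R) %| p1 ->
  GP (Some a) b (Some c) d (p1, q1) (p2, q2).
Proof.
move=> hab -> -> h1 h2 hdv; split => //=.
- rewrite /Rhomog /=; apply/andP; split.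
    apply: (@pcompM' _ _ (Posz (absz (b - a - 1)%R)) (d - b) _ _ (@pcompX _ _ erefl) h2) => //.
    lia.
  by apply: pcomp_deg h1; lia.
- rewrite /Rhomog /= pcomp0 /=; by apply: pcomp_deg h2; lia.
- split => //; rewrite /Rmul; relring.
Qed.

Lemma GP_SN_E a b d p1 q1 p2 q2 :
  GP (Some a) b None d (p1, q1) (p2, q2) ->
  [/\ q1 = 0, p2 = 0, q2 = 0 & pcomp p1 (d - a)].
Proof.
case=> /= /eqP hm1 /eqP hm2 /andP[hd1 _] _ [r1 _ _].
case: r1 => /esym /eqP; rewrite mul0r mulf_eq0 (negPf (Xn_neq0 _)) /= => /eqP e1.
split => //; by apply: pcomp_deg hd1; lia.
Qed.

Lemma GP_SN_I a b d p1 : pcomp p1 (d - a) -> GP (Some a) b None d (p1, 0) 0.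
Proof.
move=> h; split => //=.
- apply/andP; split; [apply: pcomp_deg h; lia | exact/eqP].
- apply/andP; split; [exact: pcomp0 | exact/eqP].
- split => //; relring.
Qed.

Lemma GP_NS_E b c d p1 q1 m2 :
  GP None b (Some c) d (p1, q1) m2 -> [/\ m2 = 0, p1 = 0 & pcomp q1 (d - b)].
Proof.
case=> _ _ hd1 _ [r1 _ hN]; have e := hN erefl; subst m2.
move: r1 hd1; rewrite /= /Rmul /Rhomog zeroRelE /= => -[] _.
rewrite !mul0r add0r mul1r mulr0 addr0 => -> /andP[_ h].
split => //; by apply: pcomp_deg h; lia.
Qed.

Lemma GP_NS_I b c d q1 : pcomp q1 (d - b) -> GP None b (Some c) d (0, q1) 0.
Proof.
move=> h; split => //=.
- rewrite /Rhomog /= pcomp0 /=; by apply: pcomp_deg h; lia.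
- by rewrite zeroRelE /Rhomog /= !pcomp0.
- split => //; rewrite /Rmul; relring.
Qed.

Lemma GP_NN_E b d p1 q1 m2 :
  GP None b None d (p1, q1) m2 -> [/\ m2 = 0, q1 = 0 & pcomp p1 (d - b)].
Proof.
case=> /= /eqP hm1 _ /andP[hd1 _] _ [_ _ hN]; have e := hN erefl.
split => //; by apply: pcomp_deg hd1; lia.
Qed.

Lemma GP_NN_I b d p1 : pcomp p1 (d - b) -> GP None b None d (p1, 0) 0.
Proof.
move=> h; split => //=.
- apply/andP; split; [apply: pcomp_deg h; lia | exact/eqP].
- apply/andP; split; [exact: pcomp0 | exact/eqP].
- split => //; relring.
Qed.

Lemma pos_ex p e : pcomp p e -> 0 <= e -> exists al, p = al *: 'X^(absz e).
Proof. by move=> h he; exists p`_(absz e); apply: pcomp_pos. Qed.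
Arguments pos_ex {p e}.
Arguments pcomp_neg {p e}.
Arguments scX0 {al m}.

Theorem proposition4p3 (a : option int) (b : int) (c : option int) (d : int) :
  arc_ok a b -> arc_ok c d ->
  hom_iso_Ck a b c d
    (if (a != None) && le_ext a c && (b <= d) then 2%N
     else if (a == None) && (d < b) then 0%N
     else if (if a is Some a' then d < a' else false) then 0%N
     else 1%N).
Proof.
move=> hab0 hcd0.
case: a hab0 => [a|] hab0; case: c hcd0 => [c|] hcd0 /=.
- have hab : a < b := hab0.
  have hcd : c < d := hcd0.
  case: ifP => [/andP[hac hbd] | hn].
  + apply: (@iso2 _ _ _ _ ('X^(absz (b - a - 1)%R) * 'X^(absz (d - b)%R), 0)
                 (0, 'X^(absz (d - b)%R)) (0, 'X^(absz (d - a)%R)) (0, 0) hab0).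
    * apply: GP_SS_I => //; first exact: pcomp0.
        by apply: pcompX; lia.
      by rewrite -exprD dvdp_exp2l //; lia.
    * apply: GP_SS_I => //; try (by rewrite mulr0); try (by apply: pcompX; lia);
        try exact: pcomp0; try exact: dvdp0.
    * move=> al be; rewrite /sc !addRelE zeroRelE /= => -[] h1 h2 _.
      rewrite scaler0 addr0 -exprD in h1; rewrite scaler0 add0r in h2.
      by split; [exact: scX0 h1 | exact: scX0 h2].
    * move=> [p1 q1] [p2 q2] /GP_SS_E [e2 e1 h1 h2 hdv].
      have [al Eq2] := pos_ex h2 (ltac:(lia)).
      have [be Eq1] := pos_ex h1 (ltac:(lia)).
      exists al, be; rewrite e1 e2 Eq2 Eq1; split; relring.
  + case: ifP => hda.
    * apply: iso0 => // -[p1 q1] [p2 q2] /GP_SS_E [e2 e1 h1 h2 _].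
      have q1z := pcomp_neg h1 (ltac:(lia)).
      have q2z := pcomp_neg h2 (ltac:(lia)).
      by rewrite e1 e2 q1z q2z mulr0 zeroRelE.
    * apply: (@iso1 _ _ _ _ (0, 'X^(absz (d - a)%R)) (0, 0) hab0).
      - apply: GP_SS_I => //; try (by rewrite mulr0); try (by apply: pcompX; lia);
          try exact: pcomp0; try exact: dvdp0.
      - by left; rewrite zeroRelE => -[] /eqP; rewrite (negPf (Xn_neq0 _)).
      - move=> [p1 q1] [p2 q2] /GP_SS_E [e2 e1 h1 h2 hdv].
        have q2z : q2 = 0.
          case: (boolP (b <= d)) => hbd; last first.
            by apply: (pcomp_neg h2); lia.
          rewrite hbd andbT in hn.
          have [al Eq2] := pos_ex h2 (ltac:(lia)).
          have := @dvdX_coef _ _ (absz (d - b)%R + absz (b - a - 1)%R) hdv.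
          rewrite e1 mulrC coefMXn addnK Eq2 coefZ coefXn eqxx mulr1.
          rewrite [(_ < absz (b - a - 1)%R)%N]ltnNge leq_addl /=.
          move=> H; rewrite H ?scale0r //; lia.
        have [be Eq1] := pos_ex h1 (ltac:(lia)).
        exists be; rewrite e1 e2 q2z Eq1; split; relring.
- have hab : a < b := hab0.
  case: ifP => hda.
  + apply: iso0 => // -[p1 q1] [p2 q2] /GP_SN_E [e1 e2 e3 h].
    have pz := pcomp_neg h (ltac:(lia)).
    by rewrite e1 e2 e3 pz zeroRelE.
  + apply: (@iso1 _ _ _ _ ('X^(absz (d - a)%R), 0) 0 hab0).
    * by apply: GP_SN_I; apply: pcompX; lia.
    * by left; rewrite zeroRelE => -[] /eqP; rewrite (negPf (Xn_neq0 _)).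
    * move=> [p1 q1] [p2 q2] /GP_SN_E [e1 e2 e3 h].
      have [al Eq] := pos_ex h (ltac:(lia)).
      exists al; rewrite e1 e2 e3 Eq; split; relring.
- case: ifP => hdb.
  + apply: iso0 => // -[p1 q1] m2 /GP_NS_E [e2 e1 h].
    have qz := pcomp_neg h (ltac:(lia)).
    by rewrite e1 e2 qz zeroRelE.
  + apply: (@iso1 _ _ _ _ (0, 'X^(absz (d - b)%R)) 0 hab0).
    * by apply: GP_NS_I; apply: pcompX; lia.
    * by left; rewrite zeroRelE => -[] /eqP; rewrite (negPf (Xn_neq0 _)).
    * move=> [p1 q1] m2 /GP_NS_E [e2 e1 h].
      have [al Eq] := pos_ex h (ltac:(lia)).
      exists al; rewrite e1 e2 Eq; split; relring.
- case: ifP => hdb.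
  + apply: iso0 => // -[p1 q1] m2 /GP_NN_E [e2 e1 h].
    have qz := pcomp_neg h (ltac:(lia)).
    by rewrite e1 e2 qz zeroRelE.
  + apply: (@iso1 _ _ _ _ ('X^(absz (d - b)%R), 0) 0 hab0).
    * by apply: GP_NN_I; apply: pcompX; lia.
    * by left; rewrite zeroRelE => -[] /eqP; rewrite (negPf (Xn_neq0 _)).
    * move=> [p1 q1] m2 /GP_NN_E [e2 e1 h].
      have [al Eq] := pos_ex h (ltac:(lia)).
      exists al; rewrite e1 e2 Eq; split; relring.
Qed.
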